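(* Let $\psi$ be an $n$-dimensional unique sink orientation, and let $v^0, v^1, \dots, v^\rho$ be the sequence of vertices produced by Algorithm 1 started at $v^0$, where $\rho$ is the iteration in which the algorithm terminates. Then $r_\psi(v^0) \supseteq r_\psi(v^1) \supseteq \dots \supseteq r_\psi(v^\rho)$.
   Context: Let $Q^n = 2^{[n]}$ be the vertex set of the $n$-cube, with $u,v$ adjacent iff $|u\oplus v|=1$; faces are $F_{J,v}=\{u : v\oplus u\subseteq J\}$ for $J\subseteq[n]$. A unique sink orientation (USO) is an orientation of the cube's edges such that every nonempty face has a unique sink (vertex with no outgoing edges within the face). The outmap $s_\psi(v)$ is the set of coordinates $j$ such that the edge $\{v,v\oplus\{j\}\}$ is directed away from $v$. The reachmap is $r_\psi(v)=s_\psi(v)\cup\{j : \exists u \text{ reachable from } v \text{ by a directed path with } j\in s_\psi(u)\}$. Algorithm 1: given a starting vertex $v^0$, set $E^0=\emptyset$ and $j=0$; while $s_\psi(v^j)\neq\emptyset$: pick any $b\in s_\psi(v^j)$, let $v^{j+1}$ be the sink of the face $F_{E^j, v^j\oplus\{b\}}$ (computed by the Fibonacci Seesaw algorithm of Szabó and Welzl), set $E^{j+1}=E^j\cup\{b\}$ and $j\leftarrow j+1$. The algorithm terminates at iteration $\rho$ when $s_\psi(v^\rho)=\emptyset$. *)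

(* Defs.v *)
(* Vertices of the n-cube Q^n are subsets of [n] = 'I_n. *)
From mathcomp Require Import all_boot.
Set Implicit Arguments. Unset Strict Implicit. Unset Printing Implicit Defensive.

Section Cube.
Variable n : nat.
Notation vert := {set 'I_n}.

Definition symd (u v : vert) : vert := (u :\: v) :|: (v :\: u).

Definition face (J v : vert) : {set vert} := [set u | symd v u \subset J].

(* An orientation is given by its outmap s : s v = set of coordinates j
   such that edge {v, v (+) {j}} is directed away from v.  Consistency:
   each edge gets exactly one direction. *)
Definition is_orientation (s : vert -> vert) : Prop :=
  forall (v : vert) (j : 'I_n), (j \in s v) = (j \notin s (symd v [set j])).

(* u is a sink of the face F_{J,v}: u in the face and no outgoing edge of u
   inside the face (the edges of u inside F_{J,v} are the directions in J). *)
Definition is_sink (s : vert -> vert) (J v u : vert) : bool :=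
  (u \in face J v) && (s u :&: J == set0).

Definition is_USO (s : vert -> vert) : Prop :=
  is_orientation s /\
  forall J v : vert, exists! u : vert, is_sink s J v u.

Definition dedge (s : vert -> vert) : rel vert :=
  fun u w => [exists j, (j \in s u) && (w == symd u [set j])].

Definition reachmap (s : vert -> vert) (v : vert) : vert :=
  s v :|: [set j | [exists u, connect (dedge s) v u && (j \in s u)]].

Definition alg1_run (s : vert -> vert) (vs Es : nat -> vert) (rho : nat) : Prop :=
  Es 0 = set0 /\
  (forall j, j < rho ->
     s (vs j) != set0 /\
     exists2 b, b \in s (vs j) &
       is_sink s (Es j) (symd (vs j) [set b]) (vs j.+1) /\
       Es j.+1 = Es j :|: [set b]) /\
  s (vs rho) = set0.

End Cube.

(* Main.v *)
Require Import Defs.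
From mathcomp Require Import all_boot.

Lemma in_symd n (a b : {set 'I_n}) x : (x \in symd a b) = (x \in a) (+) (x \in b).
Proof. rewrite /symd !inE; by case: (x \in a); case: (x \in b). Qed.

Lemma faceP n (J v u : {set 'I_n}) :
  reflect (forall x, (x \in v) (+) (x \in u) -> x \in J) (u \in face J v).
Proof.
rewrite /face inE; apply: (iffP subsetP) => H x.
  by move=> h; apply: H; rewrite in_symd.
by rewrite in_symd; exact: H.
Qed.

Lemma emptyP n (A J : {set 'I_n}) :
  reflect (forall x, x \in A -> x \in J -> False) (A :&: J == set0).
Proof.
apply: (iffP eqP) => H.
  move=> x hx hJ; have: x \in A :&: J by rewrite inE hx hJ.
  by rewrite H inE.
apply/setP => x; rewrite !inE; apply/negbTE/andP => [[a b]]; exact: H x a b.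
Qed.

Lemma uso_uniq n (s : {set 'I_n} -> {set 'I_n}) J v a b :
  is_USO s -> is_sink s J v a -> is_sink s J v b -> a = b.
Proof.
move=> [_ H] ha hb; have [x [_ Hx]] := H J v.
by rewrite -(Hx _ ha) -(Hx _ hb).
Qed.

Lemma sink_reach n (s : {set 'I_n} -> {set 'I_n}) : is_USO s ->
  forall k (J v u t : {set 'I_n}), #|J| <= k -> u \in face J v ->
  is_sink s J v t -> connect (dedge s) u t.
Proof.
move=> Huso; elim=> [|k IH] J v u t.
- rewrite leqn0 cards_eq0 => /eqP -> /faceP Hu /andP[/faceP Ht _].
  have -> : u = t.
    apply/setP=> x; move: (Hu x) (Ht x); rewrite in_set0.
    case: (x \in v); case: (x \in u); case: (x \in t) => //= h1 h2;
      by [move: (h1 isT) | move: (h2 isT)].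
  exact: connect0.
move=> HJ /faceP Hu /andP[/faceP Ht /emptyP Hst].
case: (set_0Vmem J) => [J0|[i iJ]].
  have -> : u = t.
    apply/setP=> x; move: (Hu x) (Ht x); rewrite J0 in_set0.
    case: (x \in v); case: (x \in u); case: (x \in t) => //= h1 h2;
      by [move: (h1 isT) | move: (h2 isT)].
  exact: connect0.
set J' := J :\ i.
have HJ' : #|J'| <= k.
  by move: HJ; rewrite (cardsD1 i J) iJ.
have inJ' : forall x, (x \in J') = (x != i) && (x \in J) by move=> x; rewrite !inE.
have [_ Hu2] := Huso; have [t1 [Ht1 _]] := Hu2 J' u.
have cu1 : connect (dedge s) u t1.
  apply: (IH J' u u t1 HJ' _ Ht1); apply/faceP => x; by rewrite addbb.
move: Ht1 => /andP[/faceP Ht1f /emptyP Ht1s].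
case: (boolP (i \in s t1)) => Hi; last first.
  have -> : t = t1; last by [].
  apply: (@uso_uniq _ s J v _ _ Huso); first by rewrite /is_sink; apply/andP; split; [apply/faceP|apply/emptyP].
  apply/andP; split.
    apply/faceP => x; move: (Hu x) (Ht1f x); rewrite inJ'.
    case: (x \in v); case: (x \in u); case: (x \in t1) => //= h1 h2;
      by [apply: h1 | case/andP: (h2 isT)].
  apply/emptyP => x hx hJ; case: (eqVneq x i) => [exi|nxi].
    by move: hx; rewrite exi (negbTE Hi).
  by apply: (Ht1s x hx); rewrite inJ' nxi.
case: (boolP (t \in face J' u)) => Htf.
  have -> : t = t1; last by [].
  apply: (@uso_uniq _ s J' u _ _ Huso).
    apply/andP; split => //; apply/emptyP => x hx; rewrite inJ' => /andP[_ hJ].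
    exact: Hst x hx hJ.
  by apply/andP; split; [apply/faceP|apply/emptyP].
have [y Hy] : exists y, ((y \in u) (+) (y \in t)) && (y \notin J').
  apply/existsP; apply: contraR Htf; rewrite negb_exists => /forallP H.
  apply/faceP => x hx; move: (H x); rewrite hx /=; by rewrite negbK.
have Hi' : (i \in u) (+) (i \in t).
  move: Hy => /andP[hy]; rewrite inJ' negb_and negbK.
  have yJ : y \in J.
    move: (Hu y) (Ht y) hy; case: (y \in v); case: (y \in u); case: (y \in t) => //= h1 h2;
      by [apply: h1 | apply: h2].
  by rewrite yJ orbF => /eqP <-.
set w := symd t1 [set i].
apply: (connect_trans cu1); apply: (connect_trans (connect1 _)).
  by apply/existsP; exists i; rewrite Hi /=.
apply: (IH J' w w t HJ'); first by apply/faceP => x; rewrite addbb.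
apply/andP; split; last first.
  apply/emptyP => x hx; rewrite inJ' => /andP[_ hJ]; exact: Hst x hx hJ.
apply/faceP => x; rewrite /w in_symd in_set1 inJ'.
case: (eqVneq x i) => [->|nxi] /=.
  move: (Ht1f i) Hi'; rewrite inJ' eqxx /=.
  by case: (i \in u); case: (i \in t1); case: (i \in t) => //= h; move: (h isT).
rewrite addbF => hx.
move: (Hu x) (Ht x) (Ht1f x) hx; rewrite inJ' nxi /=.
by case: (x \in v); case: (x \in u); case: (x \in t1); case: (x \in t) => //= h1 h2 h3;
  by [apply: h1 | apply: h2 | apply: h3].
Qed.

Theorem lemma17 (n : nat) (s : {set 'I_n} -> {set 'I_n})
    (vs Es : nat -> {set 'I_n}) (rho : nat) :
  is_USO s -> alg1_run s vs Es rho ->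
  forall j, j < rho -> reachmap s (vs j.+1) \subset reachmap s (vs j).
Proof.
move=> Huso [_ [Hrun _]] j hj.
have [_ [b hb [Hsink _]]] := Hrun j hj.
have Hc : connect (dedge s) (vs j) (vs j.+1).
  apply: (connect_trans (connect1 (_ : dedge s (vs j) (symd (vs j) [set b])))).
    by apply/existsP; exists b; rewrite hb eqxx.
  apply: (@sink_reach _ s Huso _ (Es j) _ _ (vs j.+1) (leqnn _) _ Hsink).
  by apply/faceP => x; rewrite addbb.
apply/subsetP => x; rewrite /reachmap !inE => /orP[hx|/existsP[u /andP[cu hu]]];
  apply/orP; right; apply/existsP.
  by exists (vs j.+1); rewrite Hc hx.
by exists u; rewrite (connect_trans Hc cu) hu.
Qed.
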